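(* Let $(\mathbb{C},\mathcal{N})$ be a regular multi-pointed category with $\mathcal{N}$-kernels, in which every kernel star has a coequaliser and every regular diamond of the form (1) is left saturated. Then the following are equivalent: (i) $(\mathbb{C},\mathcal{N})$ is a star-regular category; (ii) for every morphism $m\colon U\to V$, $m$ is a monomorphism if and only if its kernel star $M^*$ equals $\Delta_U^*$.
   Context: Throughout, $\mathbb{C}$ is a finitely complete regular category. An ideal of morphisms is a class $\mathcal{N}$ of morphisms of $\mathbb{C}$ such that for composable $f,g$, if $f\in\mathcal{N}$ or $g\in\mathcal{N}$ then $gf\in\mathcal{N}$; $(\mathbb{C},\mathcal{N})$ is then called a multi-pointed category. A star on $X$ is a pair of parallel morphisms $\tau=(\tau_1,\tau_2)\colon T\rightrightarrows X$ with $\tau_1\in\mathcal{N}$; it is a monic star if $\tau_1,\tau_2$ are jointly monic. An $\mathcal{N}$-kernel of $f\colon X\to Y$ is a morphism $k\colon \mathcal{N}\ker(f)\to X$ with $fk\in\mathcal{N}$ such that every $g\colon L\to X$ with $fg\in\mathcal{N}$ factors uniquely through $k$. For a relation $\rho=(\rho_1,\rho_2)\colon R\rightrightarrows X$, $\rho^*\colon R^*\rightrightarrows X$ is the monic star $(\rho_1k,\rho_2k)$, where $k\colon R^*\to R$ is the $\mathcal{N}$-kernel of $\rho_1$; $\Delta_X^*:=(1_X,1_X)^*$. The kernel star of $f\colon X\to Y$, denoted by the corresponding capital letter $F^*\rightrightarrows X$, is $Eq(f)^*$, where $Eq(f)$ is the kernel pair of $f$. Every star factors uniquely up to isomorphism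 as a regular epimorphism followed by a monic star; for $f\colon X\to Y$ and a star $\lambda\colon U\rightrightarrows X$, the image $f(\lambda)\colon f(U)\rightrightarrows Y$ is the monic star part of the factorisation of $(f\lambda_1,f\lambda_2)$. A star-regular category is a regular multi-pointed category with $\mathcal{N}$-kernels in which every regular epimorphism is a coequaliser of some star. A diamond is a commutative square $ge=hf$ with $e\colon X\to Z$, $f\colon X\to Y$, $g\colon Z\to W$, $h\colon Y\to W$; it is regular if all four arrows are regular epimorphisms, and left saturated if $e(F^* )=G^*$. A regular diamond of the form (1) is one with $h=1_Y$ (so $ge=f$). *)

(* Defs.v *)
Set Implicit Arguments.
Unset Strict Implicit.

Record Cat := {
  Ob : Type;
  Hom : Ob -> Ob -> Type;
  idm : forall X, Hom X X;
  comp : forall X Y Z, Hom Y Z -> Hom X Y -> Hom X Z;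
  comp_id_l : forall X Y (f : Hom X Y), comp (idm Y) f = f;
  comp_id_r : forall X Y (f : Hom X Y), comp f (idm X) = f;
  comp_assoc : forall X Y Z W (f : Hom X Y) (g : Hom Y Z) (h : Hom Z W),
      comp h (comp g f) = comp (comp h g) f
}.

Arguments Hom : clear implicits.
Arguments idm {c} X.
Arguments comp {c X Y Z} _ _.

Section CatDefs.
Variable C : Cat.
Notation Ob := (Ob C).
Notation Hom := (Hom C).

Definition mono {X Y : Ob} (f : Hom X Y) : Prop :=
  forall Z (g h : Hom Z X), comp f g = comp f h -> g = h.

Definition jointly_monic {T X Y : Ob} (a : Hom T X) (b : Hom T Y) : Prop :=
  forall Z (g h : Hom Z T), comp a g = comp a h -> comp b g = comp b h -> g = h.

Definition is_terminal (T : Ob) : Prop :=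
  forall X : Ob, exists! f : Hom X T, True.

Definition is_pullback {X Y Z P : Ob} (f : Hom X Z) (g : Hom Y Z)
  (p1 : Hom P X) (p2 : Hom P Y) : Prop :=
  comp f p1 = comp g p2 /\
  forall Q (q1 : Hom Q X) (q2 : Hom Q Y), comp f q1 = comp g q2 ->
    exists! u : Hom Q P, comp p1 u = q1 /\ comp p2 u = q2.

Definition finitely_complete : Prop :=
  (exists T : Ob, is_terminal T) /\
  (forall X Y Z (f : Hom X Z) (g : Hom Y Z),
      exists P (p1 : Hom P X) (p2 : Hom P Y), is_pullback f g p1 p2).

Definition is_coequaliser {T X Q : Ob} (a b : Hom T X) (q : Hom X Q) : Prop :=
  comp q a = comp q b /\
  forall W (h : Hom X W), comp h a = comp h b -> exists! u : Hom Q W, comp u q = h.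

Definition regular_epi {X Q : Ob} (q : Hom X Q) : Prop :=
  exists T (a b : Hom T X), is_coequaliser a b q.

Definition is_kernel_pair {X Y P : Ob} (f : Hom X Y) (p1 p2 : Hom P X) : Prop :=
  is_pullback f f p1 p2.

Definition regular_category : Prop :=
  finitely_complete /\
  (forall X Y P (f : Hom X Y) (p1 p2 : Hom P X), is_kernel_pair f p1 p2 ->
      exists Q (q : Hom X Q), is_coequaliser p1 p2 q) /\
  (forall X Y Z P (f : Hom X Z) (g : Hom Y Z) (p1 : Hom P X) (p2 : Hom P Y),
      regular_epi f -> is_pullback f g p1 p2 -> regular_epi p2).

Variable N : forall X Y : Ob, Hom X Y -> Prop.

Definition ideal : Prop :=
  forall X Y Z (f : Hom X Y) (g : Hom Y Z), (N f \/ N g) -> N (comp g f).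

Definition is_N_kernel {X Y K : Ob} (f : Hom X Y) (k : Hom K X) : Prop :=
  N (comp f k) /\
  forall L (g : Hom L X), N (comp f g) -> exists! u : Hom L K, comp k u = g.

Definition has_N_kernels : Prop :=
  forall X Y (f : Hom X Y), exists K (k : Hom K X), is_N_kernel f k.

(* (s1,s2) : S ⇉ X represents rho^* for the relation (r1,r2) : R ⇉ X *)
Definition star_of {R S X : Ob} (r1 r2 : Hom R X) (s1 s2 : Hom S X) : Prop :=
  exists k : Hom S R, is_N_kernel r1 k /\ s1 = comp r1 k /\ s2 = comp r2 k.

Definition kernel_star {X Y S : Ob} (f : Hom X Y) (s1 s2 : Hom S X) : Prop :=
  exists P (p1 p2 : Hom P X), is_kernel_pair f p1 p2 /\ star_of p1 p2 s1 s2.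

Definition diag_star {U S : Ob} (s1 s2 : Hom S U) : Prop :=
  star_of (idm U) (idm U) s1 s2.

(* equality of (monic) stars / relations, i.e. up to a compatible isomorphism *)
Definition same_star {S T X : Ob} (s1 s2 : Hom S X) (t1 t2 : Hom T X) : Prop :=
  exists (i : Hom S T) (j : Hom T S),
    comp j i = idm S /\ comp i j = idm T /\ comp t1 i = s1 /\ comp t2 i = s2.

(* (m1,m2) : W ⇉ Y represents the image e(lambda) of (l1,l2) : U ⇉ X under e:
   the jointly monic part of the (regular epi, jointly monic) factorisation of
   (e l1, e l2). *)
Definition is_image {X Y U W : Ob} (e : Hom X Y) (l1 l2 : Hom U X)
  (m1 m2 : Hom W Y) : Prop :=
  exists q : Hom U W, regular_epi q /\ jointly_monic m1 m2 /\
    comp m1 q = comp e l1 /\ comp m2 q = comp e l2.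

(* the diamond g ∘ e = 1_Y ∘ f is left saturated: e(F^* ) = G^* *)
Definition left_saturated1 {X Y Z : Ob} (e : Hom X Z) (f : Hom X Y) (g : Hom Z Y)
  : Prop :=
  forall K (k1 k2 : Hom K X), kernel_star f k1 k2 ->
  forall W (m1 m2 : Hom W Z), is_image e k1 k2 m1 m2 ->
  forall G (g1 g2 : Hom G Z), kernel_star g g1 g2 ->
  same_star m1 m2 g1 g2.

Definition regular_diamonds1_left_saturated : Prop :=
  forall X Y Z (e : Hom X Z) (f : Hom X Y) (g : Hom Z Y),
    regular_epi e -> regular_epi f -> regular_epi g -> comp g e = f ->
    left_saturated1 e f g.

Definition kernel_stars_have_coequalisers : Prop :=
  forall X Y S (f : Hom X Y) (s1 s2 : Hom S X), kernel_star f s1 s2 ->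
    exists Q (q : Hom X Q), is_coequaliser s1 s2 q.

Definition star_regular : Prop :=
  regular_category /\ ideal /\ has_N_kernels /\
  forall X Q (q : Hom X Q), regular_epi q ->
    exists T (t1 t2 : Hom T X), N t1 /\ is_coequaliser t1 t2 q.

Definition mono_iff_trivial_kernel_star : Prop :=
  forall U V (m : Hom U V),
  forall K (k1 k2 : Hom K U), kernel_star m k1 k2 ->
  forall D (d1 d2 : Hom D U), diag_star d1 d2 ->
  (mono m <-> same_star k1 k2 d1 d2).

End CatDefs.

(* Main.v *)
Require Import Defs.
Set Implicit Arguments.
Unset Strict Implicit.

Lemma coeq_epi (C : Cat) (T X Q : Ob C) (a b : Hom C T X) (q : Hom C X Q) :
  is_coequaliser a b q -> forall W (u v : Hom C Q W), comp u q = comp v q -> u = v.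
Proof.
  intros [Hq H] W u v Huv.
  destruct (H W (comp u q)) as [w [_ Hw]].
  { rewrite <- !comp_assoc, Hq. reflexivity. }
  transitivity w; [symmetry|]; apply Hw; auto.
Qed.

Lemma regepi_epi (C : Cat) (X Q : Ob C) (q : Hom C X Q) :
  regular_epi q -> forall W (u v : Hom C Q W), comp u q = comp v q -> u = v.
Proof. intros [T [a [b H]]]. eapply (coeq_epi (C:=C)); eauto. Qed.

Lemma image_fact (C : Cat) (Hreg : regular_category C) (K Z : Ob C) (h : Hom C K Z) :
  exists W (c : Hom C K W) (m : Hom C W Z), regular_epi c /\ mono m /\ comp m c = h.
Proof.
  destruct Hreg as [[_ Hpb] [Hkp Hst]].
  destruct (Hpb _ _ _ h h) as [P [a [b Hab]]].
  destruct (Hkp _ _ _ h a b Hab) as [W [c Hc]].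
  assert (Hce : regular_epi c) by (exists P, a, b; exact Hc).
  destruct Hc as [Hc1 Hc2].
  destruct (Hc2 _ h (proj1 Hab)) as [m [Hm _]].
  exists W, c, m. split; [exact Hce|]. split; [|exact Hm].
  destruct (Hpb _ _ _ m m) as [R [x [y Hxy]]].
  assert (Exy : x = y).
  { destruct (Hpb _ _ _ c x) as [P1 [z1 [pi Hp1]]].
    pose proof (Hst _ _ _ _ c x z1 pi Hce Hp1) as Hpi.
    destruct (Hpb _ _ _ c (comp y pi)) as [P2 [z2 [rho Hp2]]].
    pose proof (Hst _ _ _ _ c (comp y pi) z2 rho Hce Hp2) as Hrho.
    assert (E : comp h (comp z1 rho) = comp h z2).
    { rewrite <- Hm.
      rewrite <- (comp_assoc (comp z1 rho) c m).
      rewrite (comp_assoc rho z1 c), (proj1 Hp1).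
      rewrite <- (comp_assoc rho pi x), (comp_assoc (comp pi rho) x m), (proj1 Hxy).
      rewrite <- (comp_assoc (comp pi rho) y m), (comp_assoc rho pi y).
      rewrite <- (proj1 Hp2). rewrite comp_assoc. reflexivity. }
    destruct (proj2 Hab _ _ _ E) as [w [[Hw1 Hw2] _]].
    assert (E2 : comp x (comp pi rho) = comp y (comp pi rho)).
    { rewrite (comp_assoc rho pi x), <- (proj1 Hp1).
      rewrite <- (comp_assoc rho z1 c), <- Hw1.
      rewrite (comp_assoc w a c), Hc1, <- (comp_assoc w b c), Hw2.
      rewrite (proj1 Hp2). rewrite <- comp_assoc. reflexivity. }
    assert (Hepi : forall V (u v : Hom C R V), comp u (comp pi rho) = comp v (comp pi rho) -> u = v).
    { intros V u v Huv. apply (regepi_epi Hpi). apply (regepi_epi Hrho).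
      rewrite <- !comp_assoc. exact Huv. }
    apply Hepi. exact E2. }
  intros V g g' Hg.
  destruct (proj2 Hxy _ _ _ Hg) as [u [[Hu1 Hu2] _]].
  rewrite <- Hu1, <- Hu2, Exy. reflexivity.
Qed.

Lemma mono_to_same (C : Cat) (N : forall X Y : Ob C, Hom C X Y -> Prop)
  (U V : Ob C) (m : Hom C U V) (K : Ob C) (k1 k2 : Hom C K U) :
  kernel_star N m k1 k2 -> forall D (d1 d2 : Hom C D U), diag_star N d1 d2 ->
  mono m -> same_star k1 k2 d1 d2.
Proof.
  intros [P [p1 [p2 [Hkp [k [Hk [E1 E2]]]]]]] D d1 d2 [d [Hd [F1 F2]]] Hm.
  subst k1 k2 d1 d2.
  assert (Ep : p1 = p2) by (apply Hm; exact (proj1 Hkp)).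
  subst p2.
  destruct (proj2 Hkp _ (idm U) (idm U) eq_refl) as [u [[Hu1 _] _]].
  assert (Hu2 : comp u p1 = idm P).
  { destruct (proj2 Hkp _ p1 p1 (proj1 Hkp)) as [z [_ Hz]].
    transitivity z; [symmetry|]; apply Hz; split;
      rewrite ?comp_assoc, ?Hu1, ?comp_id_l, ?comp_id_r; reflexivity. }
  assert (HN1 : N _ _ (comp (idm U) (comp p1 k))) by (rewrite comp_id_l; exact (proj1 Hk)).
  destruct (proj2 Hd _ _ HN1) as [i [Hi _]].
  assert (Nd : N _ _ d) by (pose proof (proj1 Hd) as H; rewrite comp_id_l in H; exact H).
  assert (HN2 : N _ _ (comp p1 (comp u d))) by (rewrite comp_assoc, Hu1, comp_id_l; exact Nd).
  destruct (proj2 Hk _ _ HN2) as [j [Hj _]].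
  exists i, j. split; [|split; [|split]].
  - destruct (proj2 Hk _ k (proj1 Hk)) as [z [_ Hz]].
    transitivity z; [symmetry|]; apply Hz.
    + rewrite comp_assoc, Hj, <- comp_assoc, Hi, comp_assoc, Hu2, comp_id_l. reflexivity.
    + apply comp_id_r.
  - destruct (proj2 Hd _ d (proj1 Hd)) as [z [_ Hz]].
    transitivity z; [symmetry|]; apply Hz.
    + rewrite comp_assoc, Hi, <- comp_assoc, Hj, comp_assoc, Hu1, comp_id_l. reflexivity.
    + apply comp_id_r.
  - rewrite comp_id_l; exact Hi.
  - rewrite comp_id_l; exact Hi.
Qed.

Lemma same_to_mono (C : Cat) (N : forall X Y : Ob C, Hom C X Y -> Prop)
  (Hreg : regular_category C)
  (Hsr : forall X Q (q : Hom C X Q), regular_epi q ->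
      exists T (t1 t2 : Hom C T X), N _ _ t1 /\ is_coequaliser t1 t2 q)
  (U V : Ob C) (m : Hom C U V) (K : Ob C) (k1 k2 : Hom C K U) :
  kernel_star N m k1 k2 -> forall D (d1 d2 : Hom C D U), diag_star N d1 d2 ->
  same_star k1 k2 d1 d2 -> mono m.
Proof.
  intros [P [p1 [p2 [Hkp [k [Hk [E1 E2]]]]]]] D d1 d2 [d [Hd [F1 F2]]]
    [i [j [_ [_ [G1 G2]]]]].
  assert (Ekk : k1 = k2) by (rewrite <- G1, <- G2, F1, F2; reflexivity).
  destruct Hreg as [_ [Hkpc _]].
  destruct (Hkpc _ _ _ m p1 p2 Hkp) as [Q [q Hq]].
  assert (Hqr : regular_epi q) by (exists P, p1, p2; exact Hq).
  destruct (Hsr _ _ q Hqr) as [T [t1 [t2 [Nt Ht]]]].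
  destruct (proj2 Hq _ m (proj1 Hkp)) as [n [Hn _]].
  assert (Hmt : comp m t1 = comp m t2)
    by (rewrite <- Hn, <- !comp_assoc, (proj1 Ht); reflexivity).
  destruct (proj2 Hkp _ _ _ Hmt) as [w [[Hw1 Hw2] _]].
  assert (Nw : N _ _ (comp p1 w)) by (rewrite Hw1; exact Nt).
  destruct (proj2 Hk _ _ Nw) as [v [Hv _]].
  assert (Et : t1 = t2)
    by (rewrite <- Hw1, <- Hw2, <- Hv, !comp_assoc, <- E1, <- E2, Ekk; reflexivity).
  assert (Hid : comp (idm U) t1 = comp (idm U) t2) by (rewrite Et; reflexivity).
  destruct (proj2 Ht _ _ Hid) as [u [Hu _]].
  intros Z g h Hgh.
  destruct (proj2 Hkp _ _ _ Hgh) as [z [[Hz1 Hz2] _]].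
  assert (Hqg : comp q g = comp q h)
    by (rewrite <- Hz1, <- Hz2, !comp_assoc, (proj1 Hq); reflexivity).
  rewrite <- (comp_id_l g), <- (comp_id_l h), <- Hu, <- !comp_assoc, Hqg.
  reflexivity.
Qed.

Lemma dir2 (C : Cat) (N : forall X Y : Ob C, Hom C X Y -> Prop)
  (Hreg : regular_category C) (Hker : has_N_kernels N)
  (Hcoeq : kernel_stars_have_coequalisers N)
  (Hls : regular_diamonds1_left_saturated N)
  (Hii : mono_iff_trivial_kernel_star N) :
  forall X Q (q : Hom C X Q), regular_epi q ->
      exists T (t1 t2 : Hom C T X), N _ _ t1 /\ is_coequaliser t1 t2 q.
Proof.
  intros X Y q Hq.
  pose proof Hreg as [[_ Hpb] _].
  destruct (Hpb _ _ _ q q) as [P [p1 [p2 Hkp]]].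
  destruct (Hker _ _ p1) as [K [k Hk]].
  assert (HQs : kernel_star N q (comp p1 k) (comp p2 k))
    by (exists P, p1, p2; split; [exact Hkp | exists k; auto]).
  destruct (Hcoeq _ _ _ q _ _ HQs) as [Z [e He]].
  assert (Hqk : comp q (comp p1 k) = comp q (comp p2 k))
    by (rewrite !comp_assoc, (proj1 Hkp); reflexivity).
  destruct (proj2 He _ q Hqk) as [g [Hg _]].
  assert (Hee : regular_epi e) by (exists K, (comp p1 k), (comp p2 k); exact He).
  assert (Hge : regular_epi g).
  { destruct Hq as [T [a [b Hab]]].
    exists T, (comp e a), (comp e b). split.
    - rewrite !comp_assoc, Hg. exact (proj1 Hab).
    - intros W h Hh. rewrite !comp_assoc in Hh.
      destruct (proj2 Hab _ (comp h e) Hh) as [u [Hu Hu']]. exists u. split.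
      + apply (regepi_epi Hee). rewrite <- comp_assoc, Hg. exact Hu.
      + intros u' Hu'2. apply Hu'. rewrite <- Hg, comp_assoc, Hu'2. reflexivity. }
  destruct (image_fact Hreg (comp e (comp p1 k))) as [W [c [mm [Hc [Hmm Hcm]]]]].
  assert (Him : is_image e (comp p1 k) (comp p2 k) mm mm).
  { exists c. split; [exact Hc|]. split.
    - intros Z0 u v H1 _. apply Hmm. exact H1.
    - split; [exact Hcm| rewrite Hcm; exact (proj1 He)]. }
  destruct (Hpb _ _ _ g g) as [R [r1 [r2 Hr]]].
  destruct (Hker _ _ r1) as [L [l Hl]].
  assert (HGs : kernel_star N g (comp r1 l) (comp r2 l))
    by (exists R, r1, r2; split; [exact Hr | exists l; auto]).
  pose proof (Hls _ _ _ e q g Hee Hq Hge Hg) as Hsat.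
  destruct (Hsat _ _ _ HQs _ _ _ Him _ _ _ HGs) as [i [j [Hji [Hij [Hi1 Hi2]]]]].
  assert (Eg : comp r1 l = comp r2 l).
  { rewrite <- (comp_id_r (comp r1 l)), <- Hij, comp_assoc, Hi1, <- Hi2,
      <- comp_assoc, Hij, comp_id_r. reflexivity. }
  destruct (Hker _ _ (idm Z)) as [D [d Hd]].
  assert (Hdiag : diag_star N (comp (idm Z) d) (comp (idm Z) d))
    by (exists d; auto).
  assert (Hsame : same_star (comp r1 l) (comp r2 l) (comp (idm Z) d) (comp (idm Z) d)).
  { assert (HN1 : N _ _ (comp (idm Z) (comp r1 l))) by (rewrite comp_id_l; exact (proj1 Hl)).
    destruct (proj2 Hd _ _ HN1) as [i' [Hi' _]].
    destruct (proj2 Hr _ d d eq_refl) as [w [[Hw1 Hw2] _]].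
    assert (Nd : N _ _ d) by (pose proof (proj1 Hd) as H; rewrite comp_id_l in H; exact H).
    assert (Nw : N _ _ (comp r1 w)) by (rewrite Hw1; exact Nd).
    destruct (proj2 Hl _ _ Nw) as [j' [Hj' _]].
    exists i', j'. split; [|split; [|split]].
    - destruct (proj2 Hl _ l (proj1 Hl)) as [z [_ Hz]].
      transitivity z; [symmetry|]; apply Hz; [|apply comp_id_r].
      assert (HH : comp g (comp r1 l) = comp g (comp r2 l))
        by (rewrite !comp_assoc, (proj1 Hr); reflexivity).
      destruct (proj2 Hr _ _ _ HH) as [z2 [_ Hz2]].
      transitivity z2; [symmetry|]; apply Hz2; split; try reflexivity;
        rewrite (comp_assoc i' j' l), Hj', comp_assoc, ?Hw1, ?Hw2, Hi'; auto.
    - destruct (proj2 Hd _ d (proj1 Hd)) as [z [_ Hz]].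
      transitivity z; [symmetry|]; apply Hz; [|apply comp_id_r].
      rewrite comp_assoc, Hi', <- comp_assoc, Hj', Hw1. reflexivity.
    - rewrite comp_id_l; exact Hi'.
    - rewrite comp_id_l, Hi'; exact Eg. }
  pose proof (proj2 (Hii _ _ g _ _ _ HGs _ _ _ Hdiag) Hsame) as Hmono.
  destruct Hge as [T' [a' [b' Hab']]].
  assert (Eab : a' = b') by (apply Hmono; exact (proj1 Hab')).
  assert (Hid : comp (idm Z) a' = comp (idm Z) b') by (rewrite Eab; reflexivity).
  destruct (proj2 Hab' _ _ Hid) as [s [Hs _]].
  exists K, (comp p1 k), (comp p2 k). split; [exact (proj1 Hk)|]. split; [exact Hqk|].
  intros W0 h Hh. destruct (proj2 He _ h Hh) as [v [Hv _]].
  assert (Hex : comp (comp v s) q = h).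
  { rewrite <- Hg, <- comp_assoc, (comp_assoc e g s), Hs, comp_id_l. exact Hv. }
  exists (comp v s). split; [exact Hex|].
  intros u' Hu'. apply (regepi_epi Hq). rewrite Hu', Hex. reflexivity.
Qed.

Theorem lemma2p4 (C : Cat) (N : forall X Y : Ob C, Hom C X Y -> Prop)
  (Hreg : regular_category C) (Hid : ideal N) (Hker : has_N_kernels N)
  (Hcoeq : kernel_stars_have_coequalisers N)
  (Hls : regular_diamonds1_left_saturated N) :
  star_regular N <-> mono_iff_trivial_kernel_star N.
Proof.
  split.
  - intros [_ [_ [_ Hsr]]]. intros U V m K k1 k2 Hks D d1 d2 Hd. split.
    + apply (mono_to_same Hks Hd).
    + apply (same_to_mono Hreg Hsr Hks Hd).
  - intros Hii. split; [exact Hreg|]. split; [exact Hid|]. split; [exact Hker|].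
    apply dir2; assumption.
Qed.
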